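(* Let $T$ be an order tree of height at most $\omega_1$, $G$ a sparse $T$-graph, $H=G\sharp\mathbb{N}$ its ray inflation, and $0\le i<\omega_1$. Then the map $t\mapsto H[\lfloor t\rfloor\times\mathbb{N}]$, where $\lfloor t\rfloor=\{t'\in T : t\le t'\}$, is a bijection between the level $T^i$ and the set of components of $H-(T^{<i}\times\mathbb{N})$.
   Context: An order tree is a partial order $(T,\le)$ with a unique minimal element (the root) in which every set $\{t' : t'\le t\}$ is well-ordered; the height of $t$ is the order type of $\{t' : t'<t\}$; $T^i$ is the set of points of height $i$ and $T^{<i}=\bigcup_{j<i}T^j$; the height of $T$ is the supremum of the order types of its maximal chains. $t$ is a successor of $t'$ (its predecessor) if $t'<t$ with nothing strictly between; otherwise $t$ is a limit. A $T$-graph is a graph $G$ with $V(G)=T$ whose edges join comparable points and in which for every $t$ the neighbours of $t$ below $t$ (its down-neighbours) are cofinal in $\{s : s<t\}$. $G$ is sparse if the set of down-neighbours of each $t$ has order type $\mathrm{cf}(\{s : s<t\})$; for height at most $\omega_1$, this means a successor's only down-neighbour is its predecessor and a non-root limit's down-neighbours form a cofinal $\omega$-sequence below it. The ray inflation $G\sharp\mathbb{N}$ has vertex set $T\times\mathbb{N}$ and edges: $(t,n)(t,n+1)$ for all $t,n$; $(t,n)(t',n)$ for all $n$ if $t$ is a successor with predecessor $t'$; $(t,n)(t_n,n)$ for all $n$ if $t$ is a non-root limit with down-neighbours $t_0<t_1<\cdots$. $H[X]$ denotes the induced subgraph on $X$. *)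

(* Defs.v *)
Set Implicit Arguments.

Section OrderTrees.
Variable T : Type.
Variable le : T -> T -> Prop.

Definition lt (s t : T) : Prop := le s t /\ s <> t.

Definition comparable (s t : T) : Prop := le s t \/ le t s.

Definition minimal (r : T) : Prop := forall s, le s r -> s = r.

Definition well_ordered_on (A : T -> Prop) : Prop :=
  (forall x y, A x -> A y -> comparable x y) /\
  (forall S : T -> Prop, (forall x, S x -> A x) -> (exists x, S x) ->
     exists m, S m /\ forall x, S x -> le m x).

Definition order_tree : Prop :=
  (forall t, le t t) /\
  (forall s t, le s t -> le t s -> s = t) /\
  (forall s t u, le s t -> le t u -> le s u) /\
  (exists r, minimal r /\ forall r', minimal r' -> r' = r) /\
  (forall t, well_ordered_on (fun s => le s t)).

Definition countable_set (A : T -> Prop) : Prop :=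
  exists f : T -> nat, forall x y, A x -> A y -> f x = f y -> x = y.

Definition chain (C : T -> Prop) : Prop :=
  forall x y, C x -> C y -> comparable x y.

Definition maximal_chain (C : T -> Prop) : Prop :=
  chain C /\ forall x, (forall c, C c -> comparable x c) -> C x.

(* Height of T at most omega_1: every maximal chain (a well-order) has order
   type <= omega_1, i.e. each of its proper initial segments is countable. *)
Definition height_le_omega1 : Prop :=
  forall C, maximal_chain C ->
    forall c0, C c0 -> countable_set (fun c => C c /\ lt c c0).

Definition succ_of (p t : T) : Prop :=
  lt p t /\ ~ (exists u, lt p u /\ lt u t).

Definition limit (t : T) : Prop := ~ (exists p, succ_of p t).

Definition nonroot (t : T) : Prop := exists s, lt s t.

Variable E : T -> T -> Prop.

Definition down_nbr (t u : T) : Prop := E u t /\ lt u t.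

Definition T_graph : Prop :=
  (forall s t, E s t -> E t s) /\
  (forall t, ~ E t t) /\
  (forall s t, E s t -> comparable s t) /\
  (forall s t, lt s t -> exists u, down_nbr t u /\ le s u).

Definition strictly_increasing (f : nat -> T) : Prop :=
  forall m n, m < n -> lt (f m) (f n).

Definition down_enum (t : T) (f : nat -> T) : Prop :=
  strictly_increasing f /\ forall u, down_nbr t u <-> exists n, f n = u.

(* Sparse T-graph, for height at most omega_1: the only down-neighbour of a
   successor is its predecessor; the down-neighbours of a non-root limit form
   an omega-sequence (order type omega). *)
Definition sparse : Prop :=
  (forall p t, succ_of p t -> forall u, down_nbr t u <-> u = p) /\
  (forall t, limit t -> nonroot t -> exists f, down_enum t f).

Definition ray_edge0 (x y : T * nat) : Prop :=
  (fst x = fst y /\ snd y = S (snd x)) \/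
  (snd x = snd y /\ succ_of (fst y) (fst x)) \/
  (snd x = snd y /\ limit (fst x) /\ nonroot (fst x) /\
     exists f, down_enum (fst x) f /\ f (snd x) = fst y).

Definition ray_inflation (x y : T * nat) : Prop := ray_edge0 x y \/ ray_edge0 y x.

End OrderTrees.

(* ---- Ordinals below omega_1, represented by countable well-orders ---- *)
Definition wellorder (I : Type) (ltI : I -> I -> Prop) : Prop :=
  (forall x, ~ ltI x x) /\
  (forall x y z, ltI x y -> ltI y z -> ltI x z) /\
  (forall x y, ltI x y \/ x = y \/ ltI y x) /\
  well_founded ltI.

Definition countable_type (I : Type) : Prop :=
  exists f : I -> nat, forall x y, f x = f y -> x = y.

Definition order_iso (X Y : Type) (A : X -> Prop) (ltA : X -> X -> Prop)
  (B : Y -> Prop) (ltB : Y -> Y -> Prop) : Prop :=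
  exists R : X -> Y -> Prop,
    (forall x y, R x y -> A x /\ B y) /\
    (forall x, A x -> exists y, R x y) /\
    (forall y, B y -> exists x, R x y) /\
    (forall x y y', R x y -> R x y' -> y = y') /\
    (forall x x' y, R x y -> R x' y -> x = x') /\
    (forall x y x' y', R x y -> R x' y' -> (ltA x x' <-> ltB y y')).

(* t has height i, i.e. t lies in T^i, where i is the order type of (I, ltI) *)
Definition has_height (T : Type) (le : T -> T -> Prop) (t : T)
  (I : Type) (ltI : I -> I -> Prop) : Prop :=
  order_iso (fun s => lt le s t) (lt le) (fun _ : I => True) ltI.

(* t lies in T^{<i}: its height is the order type of a proper initial segment
   of (I, ltI) *)
Definition height_below (T : Type) (le : T -> T -> Prop) (t : T)
  (I : Type) (ltI : I -> I -> Prop) : Prop :=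
  exists k0 : I, order_iso (fun s => lt le s t) (lt le) (fun k => ltI k k0) ltI.

Inductive reach_in (V : Type) (adj : V -> V -> Prop) (X : V -> Prop) (v : V)
  : V -> Prop :=
| reach_refl : X v -> reach_in adj X v v
| reach_step : forall w w', reach_in adj X v w -> X w' -> adj w w' ->
    reach_in adj X v w'.

Definition is_component (V : Type) (adj : V -> V -> Prop) (X C : V -> Prop)
  : Prop :=
  exists v, X v /\ forall w, C w <-> reach_in adj X v w.

Definition up_times (T : Type) (le : T -> T -> Prop) (t : T) (v : T * nat)
  : Prop := le t (fst v).

(* Main.v *)
Require Import Defs.
From Stdlib Require Import Classical Arith Lia.
Set Implicit Arguments.

Definition iso_rel (X Y : Type) (A : X -> Prop) (ltA : X -> X -> Prop)
  (B : Y -> Prop) (ltB : Y -> Y -> Prop) (R : X -> Y -> Prop) : Prop :=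
    (forall x y, R x y -> A x /\ B y) /\
    (forall x, A x -> exists y, R x y) /\
    (forall y, B y -> exists x, R x y) /\
    (forall x y y', R x y -> R x y' -> y = y') /\
    (forall x x' y, R x y -> R x' y -> x = x') /\
    (forall x y x' y', R x y -> R x' y' -> (ltA x x' <-> ltB y y')).

Lemma iso_eq X Y A ltA B ltB :
  @order_iso X Y A ltA B ltB <-> exists R, iso_rel A ltA B ltB R.
Proof. unfold order_iso, iso_rel. tauto. Qed.

Lemma iso_contra {X I : Type} (A : X -> Prop) ltA (ltI : I -> I -> Prop) B k :
  wellorder ltI -> (forall a b, ltI a b -> B b -> B a) -> B k ->
  order_iso A ltA B ltI -> order_iso A ltA (fun j => ltI j k) ltI -> False.
Proof.
 intros [irr [tr [tri wf]]] Bdown Bk [R1 [R1a [R1b [R1c [R1d [R1e R1f]]]]]]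
   [R2 [R2a [R2b [R2c [R2d [R2e R2f]]]]]].
 set (Q := fun j m => exists x, R1 x j /\ R2 x m).
 assert (key: forall j, B j -> forall m, Q j m -> ~ ltI m j).
 { intro j; induction (wf j) as [j _ IH]. intros Bj m [x [h1 h2]] hmj.
   assert (Bm : B m) by (apply (Bdown m j); auto).
   destruct (R1c m Bm) as [y h1y].
   destruct (R1a _ _ h1y) as [Ay _].
   destruct (R2b y Ay) as [m' h2y].
   assert (ltA y x) by (apply (proj2 (R1f _ _ _ _ h1y h1)); exact hmj).
   assert (ltI m' m) by (apply (proj1 (R2f _ _ _ _ h2y h2)); auto).
   apply (IH m hmj Bm m'). exists y; split; auto. auto. }
 destruct (R1c k Bk) as [x h1]. destruct (R1a _ _ h1) as [Ax _].
 destruct (R2b x Ax) as [m h2]. destruct (R2a _ _ h2) as [_ hmk].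
 apply (key k Bk m); [exists x; auto | exact hmk].
Qed.

Lemma iso_uniq {X I : Type} (A : X -> Prop) ltA (ltI : I -> I -> Prop) k k' :
  wellorder ltI ->
  order_iso A ltA (fun j => ltI j k) ltI -> order_iso A ltA (fun j => ltI j k') ltI -> k = k'.
Proof.
 intros wo h1 h2. pose proof wo as [irr [tr [tri wf]]].
 destruct (tri k k') as [h|[h|h]]; auto; exfalso.
 - apply (@iso_contra _ _ A ltA ltI (fun j => ltI j k') k wo); eauto.
 - apply (@iso_contra _ _ A ltA ltI (fun j => ltI j k) k' wo); eauto.
Qed.

Lemma iso_restr {X I : Type} (ltA : X -> X -> Prop) (ltI : I -> I -> Prop) u' u B R j0 :
  (forall a b c, ltA a b -> ltA b c -> ltA a c) ->
  (forall a b, ltI a b -> B b -> B a) ->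
  iso_rel (fun x => ltA x u') ltA B ltI R -> ltA u u' -> R u j0 ->
  iso_rel (fun x => ltA x u) ltA (fun j => ltI j j0) ltI (fun x j => R x j /\ ltA x u).
Proof.
 intros tr Bd [Ra [Rb [Rc [Rd [Re Rf]]]]] hu hr.
 split; [|split; [|split; [|split; [|split]]]].
 - intros x y [h1 h2]. split; auto. apply (proj1 (Rf _ _ _ _ h1 hr)); auto.
 - intros x hx. destruct (Rb x (tr _ _ _ hx hu)) as [y hy]. eauto.
 - intros y hy. destruct (Ra _ _ hr) as [_ Bj0].
   destruct (Rc y (Bd _ _ hy Bj0)) as [x hx]. exists x; split; auto.
   apply (proj2 (Rf _ _ _ _ hx hr)); auto.
 - intros x y y' [h1 _] [h2 _]; eauto.
 - intros x x' y [h1 _] [h2 _]; eauto.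
 - intros x y x' y' [h1 _] [h2 _]; eauto.
Qed.

Section Tree.
Lemma lt_trans' T (le : T -> T -> Prop) a b c : order_tree le ->
  lt le a b -> lt le b c -> lt le a c.
Proof.
  intros [rf [an [tr _]]] [h1 n1] [h2 n2]. split; eauto.
  intro e; subst. apply n2. apply an; auto.
Qed.

Lemma comp_below T (le : T -> T -> Prop) x y s : order_tree le ->
  le x s -> le y s -> comparable le x y.
Proof. intros [_ [_ [_ [_ wo]]]] h1 h2. destruct (wo s) as [c _]. apply c; auto. Qed.

Definition Rk T (le : T -> T -> Prop) I (ltI : I -> I -> Prop) u k :=
  order_iso (fun x => lt le x u) (lt le) (fun j => ltI j k) ltI.

Lemma dlt I (ltI : I -> I -> Prop) k : wellorder ltI ->
  forall a b, ltI a b -> ltI b k -> ltI a k.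
Proof. intros [_ [tr _]]; eauto. Qed.

Lemma Rk_downT T (le : T -> T -> Prop) I (ltI : I -> I -> Prop) u u' k' :
  order_tree le -> wellorder ltI -> Rk le ltI u' k' -> lt le u u' ->
  exists k, ltI k k' /\ Rk le ltI u k.
Proof.
  intros ot wo h hu. apply iso_eq in h. destruct h as [R hR].
  pose proof hR as [Ra [Rb _]].
  destruct (Rb u hu) as [j0 hj0]. exists j0. split. apply (proj2 (Ra _ _ hj0)).
  apply iso_eq. eexists. apply (@iso_restr _ _ (lt le) ltI u' u (fun j => ltI j k') R j0); auto.
  intros; eapply lt_trans'; eauto. apply dlt; auto.
Qed.

Lemma Rk_down T (le : T -> T -> Prop) I (ltI : I -> I -> Prop) k u' k' :
  order_tree le -> wellorder ltI -> Rk le ltI u' k' -> ltI k k' ->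
  exists x, lt le x u' /\ Rk le ltI x k.
Proof.
  intros ot wo h hk. apply iso_eq in h. destruct h as [R hR].
  pose proof hR as [Ra [Rb [Rc _]]].
  destruct (Rc k hk) as [x hx]. exists x. split. apply (proj1 (Ra _ _ hx)).
  apply iso_eq. eexists. apply (@iso_restr _ _ (lt le) ltI u' x (fun j => ltI j k') R k); auto.
  intros; eapply lt_trans'; eauto. apply dlt; auto. apply (Ra _ _ hx).
Qed.

Lemma Rk_fun T (le : T -> T -> Prop) I (ltI : I -> I -> Prop) u k k' :
  wellorder ltI -> Rk le ltI u k -> Rk le ltI u k' -> k = k'.
Proof. intros wo h1 h2. eapply iso_uniq; eauto. Qed.

Lemma Rk_mono T (le : T -> T -> Prop) I (ltI : I -> I -> Prop) u u' k k' :
  order_tree le -> wellorder ltI -> Rk le ltI u k -> Rk le ltI u' k' -> lt le u u' ->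
  ltI k k'.
Proof.
  intros ot wo h1 h2 hu. destruct (Rk_downT ot wo h2 hu) as [j [hj hr]].
  rewrite (Rk_fun wo h1 hr). auto.
Qed.

Lemma Rk_inj T (le : T -> T -> Prop) I (ltI : I -> I -> Prop) u u' k :
  order_tree le -> wellorder ltI -> Rk le ltI u k -> Rk le ltI u' k ->
  comparable le u u' -> u = u'.
Proof.
  intros ot wo h1 h2 hc. pose proof wo as [irr _].
  destruct (classic (u = u')) as [e|ne]; auto. exfalso.
  destruct hc as [hc|hc].
  - apply (irr k). apply (Rk_mono ot wo h1 h2). split; auto.
  - apply (irr k). apply (Rk_mono ot wo h2 h1). split; auto.
Qed.

Lemma hh_below T (le : T -> T -> Prop) I (ltI : I -> I -> Prop) t s :
  order_tree le -> wellorder ltI -> has_height le t ltI -> lt le s t -> height_below le s ltI.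
Proof.
  intros ot wo h hs. unfold has_height in h. apply iso_eq in h. destruct h as [R hR].
  pose proof hR as [Ra [Rb _]].
  destruct (Rb s hs) as [j0 hj0]. exists j0.
  apply iso_eq. eexists. apply (@iso_restr _ _ (lt le) ltI t s (fun _ => True) R j0); auto.
  intros; eapply lt_trans'; eauto.
Qed.

Lemma hh_notbelow T (le : T -> T -> Prop) I (ltI : I -> I -> Prop) t s :
  order_tree le -> wellorder ltI -> has_height le t ltI -> le t s -> ~ height_below le s ltI.
Proof.
  intros ot wo h hs [k0 hk].
  destruct (classic (t = s)) as [e|ne].
  - subst. apply (@iso_contra _ _ (fun x => lt le x s) (lt le) ltI (fun _ => True) k0 wo); auto.
  - destruct (Rk_downT (le:=le) (ltI:=ltI) (u:=t) ot wo hk) as [j [_ hj]]. split; auto.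
    apply (@iso_contra _ _ (fun x => lt le x t) (lt le) ltI (fun _ => True) j wo); auto.
Qed.
End Tree.

Lemma exists_height T (le : T -> T -> Prop) I (ltI : I -> I -> Prop) s :
  order_tree le -> wellorder ltI -> ~ height_below le s ltI ->
  exists t, le t s /\ has_height le t ltI.
Proof.
  intros ot wo hs. pose proof ot as [rf [an [trn [_ wot]]]].
  pose proof wo as [irr [trI [tri wf]]].
  set (S := fun u => le u s /\ ~ exists k, Rk le ltI u k).
  destruct (proj2 (wot s) S) as [u0 [[hu0 nd] hmin]].
  { intros x [h _]; exact h. }
  { exists s. split; auto. }
  assert (below : forall x, lt le x u0 -> exists k, Rk le ltI x k).
  { intros x [hx nx]. apply NNPP; intro nk.
    assert (le u0 x) by (apply hmin; split; eauto). apply nx; auto. }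
  set (Rel := fun x j => Rk le ltI x j /\ lt le x u0).
  assert (gen : forall B : I -> Prop, (forall x j, Rel x j -> B j) ->
     (forall j, B j -> exists x, Rel x j) ->
     iso_rel (fun x => lt le x u0) (lt le) B ltI Rel).
  { intros B h1 h2. split; [|split; [|split; [|split; [|split]]]].
    - intros x y hr. split; [apply hr| eapply h1; eauto].
    - intros x hx. destruct (below x hx) as [k hk]. exists k; split; auto.
    - exact h2.
    - intros x y y' [a _] [b _]. eapply Rk_fun; eauto.
    - intros x x' y [a [ha _]] [b [hb _]]. eapply Rk_inj; eauto.
      eapply comp_below; eauto.
    - intros x y x' y' [a [ha _]] [b [hb _]]. split.
      + intro hl. eapply Rk_mono; eauto.
      + intro hl. destruct (@comp_below T le x x' s ot (trn _ _ _ ha hu0) (trn _ _ _ hb hu0)) as [c|c].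
        * destruct (classic (x = x')) as [e|ne].
          -- subst. rewrite (Rk_fun wo a b) in hl. destruct (irr _ hl).
          -- split; auto.
        * destruct (classic (x = x')) as [e|ne].
          -- subst. rewrite (Rk_fun wo a b) in hl. destruct (irr _ hl).
          -- exfalso. assert (ltI y' y) by (apply (Rk_mono ot wo b a); split; auto).
             apply (irr y); eauto. }
  assert (surj : forall k, exists x, Rel x k).
  { intro k. induction (wf k) as [k _ IH]. apply NNPP; intro nk.
    apply nd. exists k. unfold Rk. apply iso_eq. exists Rel. apply gen.
    - intros x j [hr hx]. destruct (tri j k) as [h|[h|h]]; auto.
      + subst. exfalso; apply nk. exists x; split; auto.
      + exfalso. destruct (@Rk_down T le I ltI k x j ot wo hr h) as [x' [hx' hr']].
        apply nk. exists x'. split; auto. eapply lt_trans'; eauto.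
    - intros j hj. apply IH; auto. }
  exists u0. split; auto. unfold has_height. apply iso_eq. exists Rel. apply gen; auto.
Qed.

Lemma reach_X V (adj : V -> V -> Prop) X v w : reach_in adj X v w -> X w.
Proof. intro h; destruct h; auto. Qed.

Lemma reach_X0 V (adj : V -> V -> Prop) X v w : reach_in adj X v w -> X v.
Proof. intro h; induction h; auto. Qed.

Lemma reach_trans V (adj : V -> V -> Prop) X u v w :
  reach_in adj X u v -> reach_in adj X v w -> reach_in adj X u w.
Proof. intros h1 h2. induction h2; auto. eapply reach_step; eauto. Qed.

Lemma reach_sym V (adj : V -> V -> Prop) X v w :
  (forall a b, adj a b -> adj b a) -> reach_in adj X v w -> reach_in adj X w v.
Proof.
  intros sy h. induction h as [hv|w w' h IH hw' ha].
  - apply reach_refl; auto.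
  - eapply reach_trans; [|exact IH].
    eapply reach_step; [apply reach_refl; auto| apply (reach_X h) | auto].
Qed.

Lemma edge_dir T (le : T -> T -> Prop) E x y : ray_edge0 le E x y ->
  fst x = fst y \/ lt le (fst y) (fst x).
Proof.
  intros [[h _]|[[_ h]|[_ [_ [_ [f [[_ hf] e]]]]]]]; auto.
  - right. apply h.
  - right. rewrite <- e. apply (proj2 (proj2 (hf (f (snd x))) (ex_intro _ (snd x) eq_refl))).
Qed.

Lemma lower T (le : T -> T -> Prop) I (ltI : I -> I -> Prop) t a b :
  order_tree le -> wellorder ltI -> has_height le t ltI ->
  le t a -> lt le b a -> ~ height_below le b ltI -> le t b.
Proof.
  intros ot wo ht hta [hba nba] nb.
  destruct (@comp_below T le t b a ot hta hba) as [c|c]; auto.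
  destruct (classic (b = t)) as [e|ne]. subst; auto.
  exfalso. apply nb. eapply hh_below; eauto. split; auto.
Qed.

Lemma closure T (le : T -> T -> Prop) E I (ltI : I -> I -> Prop) t w w' :
  order_tree le -> wellorder ltI -> has_height le t ltI ->
  le t (fst w) -> ~ height_below le (fst w') ltI -> ray_inflation le E w w' ->
  le t (fst w').
Proof.
  intros ot wo ht hw hx [h|h]; apply edge_dir in h; destruct h as [e|l].
  - rewrite <- e; auto.
  - eapply lower; eauto.
  - rewrite e; auto.
  - pose proof ot as [_ [_ [trn _]]]. eapply trn; eauto. apply l.
Qed.

Lemma vertical T (le : T -> T -> Prop) E (X : T * nat -> Prop) v s k :
  (forall n, X (s, n)) -> reach_in (ray_inflation le E) X v (s, k) ->
  forall n, reach_in (ray_inflation le E) X v (s, n).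
Proof.
  intros hX h.
  assert (h0 : reach_in (ray_inflation le E) X v (s, 0)).
  { clear -h hX. induction k; auto. apply IHk.
    eapply reach_step; [exact h| auto|].
    right. left. split; reflexivity. }
  intro n; induction n; auto.
  eapply reach_step; [exact IHn| auto|]. left. left. split; reflexivity.
Qed.

Lemma conn T (le : T -> T -> Prop) E I (ltI : I -> I -> Prop) t :
  order_tree le -> T_graph le E -> sparse le E -> wellorder ltI ->
  has_height le t ltI -> forall s, le t s -> forall n,
  reach_in (ray_inflation le E) (fun v : T * nat => ~ height_below le (fst v) ltI) (t, 0) (s, n).
Proof.
  intros ot tg sp wo ht s0 hs0.
  pose proof ot as [rf [an [trn [_ wot]]]].
  set (XX := fun v : T * nat => ~ height_below le (fst v) ltI).
  set (P := fun s => forall n, reach_in (ray_inflation le E) XX (t, 0) (s, n)).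
  assert (XXs : forall s n, le t s -> XX (s, n)).
  { intros s n h. unfold XX; simpl. eapply hh_notbelow; eauto. }
  enough (forall s, le s s0 -> le t s -> P s) by (apply H; auto).
  apply NNPP; intro Hn. apply not_all_ex_not in Hn. destruct Hn as [s1 Hs1].
  apply imply_to_and in Hs1. destruct Hs1 as [h1 Hs1].
  apply imply_to_and in Hs1. destruct Hs1 as [h2 Hs1].
  set (S := fun s => le s s0 /\ le t s /\ ~ P s).
  destruct (proj2 (wot s0) S) as [m [[hm0 [htm nPm]] hmin]].
  { intros x [h _]; exact h. }
  { exists s1. split; auto. }
  assert (IH : forall u, lt le u m -> le t u -> P u).
  { intros u [hu nu] htu. apply NNPP; intro np.
    apply nu. apply an; auto. apply hmin. split; eauto. }
  apply nPm. clear nPm.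
  destruct (classic (t = m)) as [e|ne].
  - subst m. intro n. eapply vertical. intro k; apply XXs; auto.
    apply reach_refl. apply XXs; auto.
  - assert (ltm : lt le t m) by (split; auto).
    destruct (classic (exists p, succ_of le p m)) as [[p hp]|hl].
    + assert (htp : le t p).
      { destruct hp as [[hpm npm] nb].
        destruct (@comp_below T le t p m ot htm hpm) as [c|c]; auto.
        destruct (classic (p = t)) as [e|ne']. subst; auto.
        exfalso. apply nb. exists t. split; [split; auto| exact ltm]. }
      intro n. eapply reach_step.
      * apply (IH p (proj1 hp) htp n).
      * apply XXs; auto.
      * right. right. left. split; [reflexivity| exact hp].
    + destruct sp as [_ sp2]. destruct (sp2 m hl (ex_intro _ t ltm)) as [f hf].
      destruct tg as [_ [_ [_ cof]]]. destruct (cof t m ltm) as [u [hu htu]].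
      pose proof hf as [finc hfe].
      destruct (proj1 (hfe u) hu) as [j hj]. subst u.
      intro n. set (k := max n j).
      assert (hfk : le t (f k)).
      { destruct (Nat.eq_dec j k) as [e|ne'].
        - rewrite <- e; auto.
        - eapply trn; [exact htu|]. apply (finc j k). unfold k; lia. }
      assert (dk : down_nbr le E m (f k)) by (apply hfe; eauto).
      apply (vertical (k := k)). intro; apply XXs; auto.
      eapply reach_step.
      * apply (IH (f k) (proj2 dk) hfk k).
      * apply XXs; auto.
      * right. right. right. split; [reflexivity|]. split; [exact hl|].
        split; [exists t; exact ltm|]. exists f. split; auto.
Qed.

Lemma claim1 T (le : T -> T -> Prop) E I (ltI : I -> I -> Prop) t :
  order_tree le -> T_graph le E -> sparse le E -> wellorder ltI ->
  has_height le t ltI -> forall w, up_times le t w <->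
  reach_in (ray_inflation le E) (fun v : T * nat => ~ height_below le (fst v) ltI) (t, 0) w.
Proof.
  intros ot tg sp wo ht [s n]. split.
  - intro h. apply conn; auto.
  - intro h. induction h as [hv|w w' h IH hw' ha].
    + unfold up_times; simpl. apply ot.
    + unfold up_times in *. eapply closure; eauto.
Qed.

Theorem lemma6p3 (T : Type) (le : T -> T -> Prop) (E : T -> T -> Prop)
  (I : Type) (ltI : I -> I -> Prop) :
  order_tree le ->
  height_le_omega1 le ->
  T_graph le E ->
  sparse le E ->
  wellorder ltI ->
  countable_type I ->
  (* the vertex set of H - (T^{<i} x N) *)
  let X := fun v : T * nat => ~ height_below le (fst v) ltI in
  let H := ray_inflation le E in
  (forall t, has_height le t ltI -> is_component H X (up_times le t)) /\
  (forall t t', has_height le t ltI -> has_height le t' ltI ->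
     (forall v, up_times le t v <-> up_times le t' v) -> t = t') /\
  (forall C, is_component H X C ->
     exists t, has_height le t ltI /\ forall v, C v <-> up_times le t v).
Proof.
  intros ot _ tg sp wo _. cbv zeta.
  pose proof ot as [rf [an _]].
  assert (sy : forall a b, ray_inflation le E a b -> ray_inflation le E b a).
  { unfold ray_inflation; tauto. }
  split; [|split].
  - intros t ht. exists (t, 0). split.
    + simpl. eapply hh_notbelow; eauto.
    + apply claim1; auto.
  - intros t t' _ _ h. apply an.
    + apply (proj2 (h (t', 0))). apply rf.
    + apply (proj1 (h (t, 0))). apply rf.
  - intros C [v [hv hC]].
    destruct (exists_height ot wo hv) as [t [htv ht]].
    exists t. split; auto. intro w. rewrite hC, (claim1 ot tg sp wo ht w).
    assert (rv : reach_in (ray_inflation le E)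
       (fun v : T * nat => ~ height_below le (fst v) ltI) (t, 0) v).
    { destruct v as [s n]. apply (claim1 ot tg sp wo ht). exact htv. }
    split; intro r.
    + eapply reach_trans; eauto.
    + eapply reach_trans; [apply reach_sym; eauto|exact r].
Qed.
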